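(* Let $A=[a_{ij}]_{i,j=1}^n\in\mathcal{M}_n(\mathbb{H})$ be an upper triangular nilpotent matrix whose associated graph $\mathcal{G}_A$ is a tree, and let $\beta=(\beta_1,\dots,\beta_n)\in\mathbb{S}^+_{\mathbb{R}^n}$. Then $$\bigcup_{z_1,\dots,z_n\in\mathbb{S}_{\mathbb{H}}}\Big\{\sum_{i,j=1}^n\beta_i\beta_j z_i^*a_{ij}z_j\Big\}=\sum_{i,j=1}^n\mathbb{S}_{\mathbb{H}}(0,\beta_i\beta_j|a_{ij}|),$$ where the right-hand side is a Minkowski (elementwise) sum of sets.
   Context: $\mathbb{H}$ denotes the real quaternions, $q^*$ the conjugate and $|q|^2=qq^*$. $\mathbb{S}_{\mathbb{H}}=\{z\in\mathbb{H}:|z|=1\}$; for $r\ge0$, $\mathbb{S}_{\mathbb{H}}(0,r)=\{q\in\mathbb{H}:|q|=r\}$ (so $\mathbb{S}_{\mathbb{H}}(0,0)=\{0\}$). $\mathbb{S}^+_{\mathbb{R}^n}=\{\beta\in\mathbb{R}^n:\|\beta\|=1,\ \beta_i\ge0\ \forall i\}$. For $A=[a_{ij}]\in\mathcal{M}_n(\mathbb{H})$, the graph $\mathcal{G}_A$ is the undirected graph on vertices $\{1,\dots,n\}$ with an edge between $i$ and $j$ (a loop if $i=j$) whenever $a_{ij}\neq0$ or $a_{ji}\neq0$. A cycle is a path from a vertex to itself (loops count as cycles); $A$ is cycle-free if $\mathcal{G}_A$ has no cycles, and $A$ is a tree (matrix) if $\mathcal{G}_A$ is connected and cycle-free. An upper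 triangular nilpotent quaternionic matrix has zero diagonal. *)

(* Defs.v *)
(* Quaternions over an arbitrary real closed field R
   (the paper's case is R = the reals). *)
From HB Require Import structures.
From mathcomp Require Import all_boot all_order all_algebra.
Set Implicit Arguments. Unset Strict Implicit. Unset Printing Implicit Defensive.
Import Order.TTheory GRing.Theory Num.Theory.
Local Open Scope ring_scope.

(* A quaternion a + b i + c j + d k is the tuple (((a, b), c), d);
   the product type inherits eqType and the (componentwise) zmodType
   structure, i.e. quaternion addition, 0, and \sum. *)
Definition quat (R : rcfType) : Type := (R * R * R * R)%type.

Section Quat.
Variable R : rcfType.

Definition qmk (a b c d : R) : quat R := (a, b, c, d).
Definition qre (q : quat R) : R := q.1.1.1.
Definition qi  (q : quat R) : R := q.1.1.2.
Definition qj  (q : quat R) : R := q.1.2.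
Definition qk  (q : quat R) : R := q.2.

Definition qreal (r : R) : quat R := qmk r 0 0 0.

Definition qmul (p q : quat R) : quat R :=
  qmk (qre p * qre q - qi p * qi q - qj p * qj q - qk p * qk q)
      (qre p * qi q + qi p * qre q + qj p * qk q - qk p * qj q)
      (qre p * qj q - qi p * qk q + qj p * qre q + qk p * qi q)
      (qre p * qk q + qi p * qj q - qj p * qi q + qk p * qre q).

Definition qconj (q : quat R) : quat R := qmk (qre q) (- qi q) (- qj q) (- qk q).

(* |q| = sqrt (q times conj q) ; q times conj q is the real a^2+b^2+c^2+d^2 *)
Definition qnorm (q : quat R) : R :=
  Num.sqrt (qre q ^+ 2 + qi q ^+ 2 + qj q ^+ 2 + qk q ^+ 2).

Definition qmx (n : nat) := 'I_n -> 'I_n -> quat R.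

Definition qmx1 (n : nat) : qmx n := fun i j => if i == j then qreal 1 else 0.
Definition qmxmul (n : nat) (A B : qmx n) : qmx n :=
  fun i j => \sum_(k < n) qmul (A i k) (B k j).
Fixpoint qmxpow (n : nat) (A : qmx n) (k : nat) : qmx n :=
  match k with 0 => @qmx1 n | k'.+1 => qmxmul (qmxpow A k') A end.

Definition qmx_upper_triangular (n : nat) (A : qmx n) : Prop :=
  forall i j : 'I_n, (j < i)%N -> A i j = 0.
Definition qmx_nilpotent (n : nat) (A : qmx n) : Prop :=
  exists k : nat, forall i j, qmxpow A k i j = 0.

(* the graph G_A: edge (or loop if i = j) iff a_ij <> 0 or a_ji <> 0 *)
Definition qgraph (n : nat) (A : qmx n) : rel 'I_n :=
  fun i j => (A i j != 0) || (A j i != 0).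

End Quat.

(* Undirected graphs given by a symmetric relation e on a finite vertex set. *)
Definition graph_connected (T : finType) (e : rel T) : Prop :=
  forall x y : T, connect e x y.

(* A cycle: a loop, or a closed walk x -> p_1 -> ... -> p_k -> x with
   x, p_1, ..., p_k pairwise distinct and k >= 2 (i.e. length >= 3). *)
Definition graph_cycle_free (T : finType) (e : rel T) : Prop :=
  (forall x : T, ~~ e x x) /\
  (forall (x : T) (p : seq T), uniq (x :: p) -> (2 <= size p)%N -> ~~ cycle e (x :: p)).

Definition graph_tree (T : finType) (e : rel T) : Prop :=
  graph_connected e /\ graph_cycle_free e.

(* Main.v *)
Require Import Defs.
From HB Require Import structures.
From mathcomp Require Import all_boot all_order all_algebra.
From mathcomp Require Import ring lra zify.
Import Order.TTheory GRing.Theory Num.Theory.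
Local Open Scope ring_scope.

Section QF.
Variable R : rcfType.
Implicit Types p q x y a t : quat R.
Ltac unq := rewrite /qmul /qconj /qreal /qmk /qre /qi /qj /qk /=.

Lemma quat_eq p q : qre p = qre q -> qi p = qi q -> qj p = qj q -> qk p = qk q -> p = q.
Proof. by case: p => [[[a b] c] d]; case: q => [[[a' b'] c'] d']; rewrite /qre /qi /qj /qk /= => -> -> -> ->. Qed.

Lemma q0E : (0 : quat R) = qmk 0 0 0 0. Proof. by []. Qed.

Definition qn2 q := qre q ^+ 2 + qi q ^+ 2 + qj q ^+ 2 + qk q ^+ 2.
Lemma qn2_ge0 q : 0 <= qn2 q.
Proof. by rewrite /qn2 !addr_ge0 ?sqr_ge0. Qed.
Lemma qnormE q : qnorm q = Num.sqrt (qn2 q). Proof. by []. Qed.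

Lemma qn2_mul p q : qn2 (qmul p q) = qn2 p * qn2 q.
Proof. rewrite /qn2; unq. ring. Qed.

Lemma qnorm_mul p q : qnorm (qmul p q) = qnorm p * qnorm q.
Proof. by rewrite !qnormE qn2_mul sqrtrM // qn2_ge0. Qed.

Lemma qnorm_conj q : qnorm (qconj q) = qnorm q.
Proof. by rewrite !qnormE /qn2; unq; rewrite !sqrrN. Qed.

Lemma qnorm_real (r : R) : qnorm (qreal r) = `|r|.
Proof. by rewrite qnormE /qn2; unq; rewrite expr0n /= !addr0 sqrtr_sqr. Qed.

Lemma qnorm_eq0 q : qnorm q = 0 -> q = 0.
Proof.
rewrite qnormE => /eqP; rewrite sqrtr_eq0 /qn2 => H.
case: q H => [[[a b] c] d]; rewrite /qre /qi /qj /qk /= => H.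
have ha : a = 0 by nra.
have hb : b = 0 by nra.
have hc : c = 0 by nra.
have hd : d = 0 by nra.
by rewrite ha hb hc hd.
Qed.

Lemma qnorm0 : qnorm (0 : quat R) = 0.
Proof. by rewrite qnormE /qn2; unq; rewrite expr0n /= !addr0 sqrtr0. Qed.

Lemma qmulA p q x : qmul p (qmul q x) = qmul (qmul p q) x.
Proof. apply: quat_eq; unq; ring. Qed.

Lemma qmul0r q : qmul 0 q = 0.
Proof. apply: quat_eq; unq; ring. Qed.
Lemma qmulr0 q : qmul q 0 = 0.
Proof. apply: quat_eq; unq; ring. Qed.
Lemma qmul1r q : qmul (qreal 1) q = q.
Proof. apply: quat_eq; unq; ring. Qed.
Lemma qmulr1 q : qmul q (qreal 1) = q.
Proof. apply: quat_eq; unq; ring. Qed.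
Lemma qmul_real (r s : R) : qmul (qreal r) (qreal s) = qreal (r * s).
Proof. apply: quat_eq; unq; ring. Qed.
Lemma qconjK q : qconj (qconj q) = q.
Proof. apply: quat_eq; unq; ring. Qed.
Lemma qconj_mulr q : qmul (qconj q) q = qreal (qn2 q).
Proof. apply: quat_eq; rewrite /qn2; unq; ring. Qed.
Lemma qmul_conjr q : qmul q (qconj q) = qreal (qn2 q).
Proof. apply: quat_eq; rewrite /qn2; unq; ring. Qed.
Lemma qreal_comm (r : R) q : qmul (qreal r) q = qmul q (qreal r).
Proof. apply: quat_eq; unq; ring. Qed.

Lemma qn2_unit q : qnorm q = 1 -> qn2 q = 1.
Proof.
rewrite qnormE => H. have := sqr_sqrtr (qn2_ge0 q). by rewrite H expr1n => <-.
Qed.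
Lemma qn2_norm q : qn2 q = qnorm q ^+ 2.
Proof. by rewrite qnormE sqr_sqrtr // qn2_ge0. Qed.

Definition qinv a := qmul (qreal (qn2 a)^-1) (qconj a).

Lemma qmulV a : a != 0 -> qmul a (qinv a) = qreal 1.
Proof.
move=> a0; have n0 : qn2 a != 0.
  apply/eqP=> h; move/eqP: a0; apply; apply: qnorm_eq0; by rewrite qnormE h sqrtr0.
by rewrite /qinv qreal_comm qmulA qmul_conjr qmul_real mulfV.
Qed.

Lemma qnorm_inv a : a != 0 -> qnorm (qinv a) = (qnorm a)^-1.
Proof.
move=> a0; have n0 : qnorm a != 0 by apply/eqP=> /qnorm_eq0 /eqP; rewrite (negPf a0).
rewrite /qinv qnorm_mul qnorm_real qnorm_conj qn2_norm ger0_norm.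
  by field.
by rewrite invr_ge0 sqr_ge0.
Qed.

Lemma qinv_ex a : a != 0 -> exists b,
  [/\ qmul a b = qreal 1, qmul b a = qreal 1 & qnorm b = (qnorm a)^-1].
Proof.
move=> a0; exists (qinv a); split; [exact: qmulV | | exact: qnorm_inv].
have n0 : qn2 a != 0.
  apply/eqP=> h; move/eqP: a0; apply; apply: qnorm_eq0; by rewrite qnormE h sqrtr0.
by rewrite /qinv -qmulA qconj_mulr qmul_real mulVf.
Qed.

Lemma step_fwd a t x : qnorm t = qnorm a -> qnorm x = 1 ->
  exists y, qnorm y = 1 /\ qmul (qmul (qconj x) a) y = t.
Proof.
move=> ht hx; case: (eqVneq a 0) ht => [->|a0] ht.
  exists x; split => //; rewrite qmulr0 qmul0r; apply/esym/qnorm_eq0; by rewrite ht qnorm0.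
have n0 : qnorm a != 0 by apply/eqP=> /qnorm_eq0 /eqP; rewrite (negPf a0).
have [b [ab ba nb]] := @qinv_ex a a0.
exists (qmul (qmul b x) t); split.
  by rewrite 2!qnorm_mul nb hx ht mulr1 mulVf.
rewrite -!qmulA [qmul b (qmul x t)]qmulA [qmul a (qmul (qmul b x) t)]qmulA.
by rewrite [qmul a (qmul b x)]qmulA ab qmul1r qmulA qconj_mulr qn2_unit // qmul1r.
Qed.

Lemma step_bwd a t x : qnorm t = qnorm a -> qnorm x = 1 ->
  exists y, qnorm y = 1 /\ qmul (qmul (qconj y) a) x = t.
Proof.
move=> ht hx; case: (eqVneq a 0) ht => [->|a0] ht.
  exists x; split => //; rewrite qmulr0 qmul0r; apply/esym/qnorm_eq0; by rewrite ht qnorm0.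
have n0 : qnorm a != 0 by apply/eqP=> /qnorm_eq0 /eqP; rewrite (negPf a0).
have [b [ab ba nb]] := @qinv_ex a a0.
exists (qconj (qmul (qmul t (qconj x)) b)); split.
  by rewrite qnorm_conj 2!qnorm_mul nb qnorm_conj hx ht mulr1 mulfV.
rewrite qconjK -!qmulA [qmul b (qmul a x)]qmulA ba qmul1r qconj_mulr qn2_unit //.
by rewrite qmulr1.
Qed.
End QF.
Section G.
Variable T : finType.
Variable e : rel T.

Definition eS (S : {set T}) : rel T := fun a b => [&& a \in S, b \in S & e a b].

Lemma path_eS_in S x p : path (eS S) x p -> forall y, y \in p -> y \in S.
Proof.
elim: p x => [|a p IH] x //= /andP[/and3P[_ aS _] hp] y.
rewrite in_cons => /orP[/eqP->//|]; exact: IH hp y.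
Qed.

Arguments path_eS_in {S x p}.

Lemma exit_edge (S : {set T}) x y : connect e x y -> x \in S -> y \notin S ->
  exists u w, [/\ u \in S, w \notin S & e u w].
Proof.
move=> /connectP[p hp ->]; elim: p x hp => [|a p IH] x /=.
  by move=> _ ->.
move=> /andP[exa hp] xS; case: (boolP (a \in S)) => aS.
  exact: IH.
by move=> _; exists x, a.
Qed.

Arguments exit_edge {S x y}.

Lemma unique_nb (S : {set T}) u v y :
  graph_cycle_free e ->
  (forall x y, x \in S -> y \in S -> connect (eS S) x y) ->
  u \in S -> y \in S -> v \notin S -> e u v -> e y v -> symmetric e -> y = u.
Proof.
move=> [irr cyc] conn uS yS vS euv eyv sym.
apply/eqP; apply/negPn/negP => yu.
have /connectP[p hp ly] := conn u y uS yS.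
case: (shortenP hp) ly => p' hp' up' sub ly.
have p'S := path_eS_in hp'.
have hp'e : path e u p' by apply: sub_path hp' => a b /and3P[].
have H1 : uniq (v :: u :: p').
  rewrite cons_uniq up' andbT in_cons negb_or; apply/andP; split.
    by apply: contra vS => /eqP ->.
  by apply/negP => /p'S; apply/negP.
have H2 : (1 < size (u :: p'))%N.
  case: p' hp' up' sub ly p'S hp'e H1 => [|a p'] //= _ _ _ ly.
  by rewrite -ly eqxx in yu.
move/negP: (cyc v (u :: p') H1 H2); apply.
rewrite /cycle /= -cats1 cat_path hp'e /= -ly sym euv /=.
by rewrite andbT.
Qed.

Arguments unique_nb {S u v y}.

Lemma tree_assign (V : Type) (Q : V -> Prop) (P : T -> T -> V -> V -> Prop) (v0 : V) :
  Q v0 -> symmetric e -> graph_connected e -> graph_cycle_free e ->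
  (forall x y a b, P x y a b -> P y x b a) ->
  (forall x y a, e x y -> Q a -> exists b, Q b /\ P x y a b) ->
  exists z : T -> V, (forall x, Q (z x)) /\ (forall x y, e x y -> P x y (z x) (z y)).
Proof.
move=> Qv0 sym conn cf Psym Pex.
have irr := cf.1.
case: (pickP T) => [r _|none]; last first.
  by exists (fun _ => v0); split => // x; have := none x.
have main : forall k, (k < #|T|)%N -> exists (S : {set T}) (z : T -> V),
  [/\ #|S| = k.+1, forall x, Q (z x),
      forall x y, x \in S -> y \in S -> connect (eS S) x y &
      forall x y, x \in S -> y \in S -> e x y -> P x y (z x) (z y)].
  elim=> [_|k IH ltk].
    exists [set r], (fun _ => v0); split => //; first exact: cards1.
      by move=> x y; rewrite !inE => /eqP -> /eqP ->; exact: connect0.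
    by move=> x y; rewrite !inE => /eqP -> /eqP ->; rewrite (negPf (irr r)).
  have [S [z [cS Qz cnS PS]]] := IH (ltnW ltk).
  have [v vS] : exists v, v \notin S.
    have : (0 < #|~: S|)%N by have := cardsC S; lia.
    by move=> /card_gt0P[v]; rewrite inE; exists v.
  have [s sS] : exists s, s \in S by apply/card_gt0P; rewrite cS.
  have [u [v' [uS v'S euv]]] := exit_edge (conn s v) sS vS.
  have uniq_u : forall y, y \in S -> e y v' -> y = u.
    by move=> y yS eyv; apply: (unique_nb cf cnS uS yS v'S euv eyv sym).
  have [b [Qb Pb]] := Pex u v' (z u) euv (Qz u).
  exists (v' |: S), (fun x => if x == v' then b else z x); split.
  - by rewrite cardsU1 v'S cS.
  - by move=> x; case: ifP.
  - have sub : forall x y, x \in S -> y \in S -> connect (eS (v' |: S)) x y.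
      move=> x y xS yS; apply: connect_sub (cnS x y xS yS) => a c.
      move=> /and3P[aS cS' eac]; apply: connect1.
      by rewrite /eS !inE aS cS' eac !orbT.
    have e1 : eS (v' |: S) u v' by rewrite /eS !inE uS eqxx orbT euv.
    have e2 : eS (v' |: S) v' u by rewrite /eS !inE uS eqxx orbT sym euv.
    move=> x y; rewrite !inE => /orP[/eqP->|xS] /orP[/eqP->|yS].
    + exact: connect0.
    + exact: connect_trans (connect1 e2) (sub _ _ uS yS).
    + exact: connect_trans (sub _ _ xS uS) (connect1 e1).
    + exact: sub.
  - have uv : u != v' by apply/eqP => h; rewrite -h uS in v'S.
    move=> x y; rewrite !inE => /orP[/eqP->|xS] /orP[/eqP->|yS].
    + by rewrite (negPf (irr v')).
    + rewrite sym => eyv; rewrite (uniq_u y yS eyv) eqxx.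
      by rewrite (negbTE uv); apply: Psym.
    + move=> exv; rewrite (uniq_u x xS exv) eqxx.
      by rewrite (negbTE uv).
    + move=> exy.
      rewrite (negbTE (_ : x != v')); last by apply/eqP => h; rewrite -h xS in v'S.
      rewrite (negbTE (_ : y != v')); last by apply/eqP => h; rewrite -h yS in v'S.
      exact: PS.
have T0 : (0 < #|T|)%N by apply/card_gt0P; exists r.
have [S [z [cS Qz _ PS]]] := main #|T|.-1 ltac:(by rewrite ltn_predL).
have ST : S = setT.
  apply/eqP; rewrite eqEcard subsetT cardsT cS; lia.
exists z; split => // x y; apply: PS; by rewrite ST inE.
Qed.
End G.

Theorem lemma3p4 (R : rcfType) (n : nat) (A : qmx R n) (beta : 'I_n -> R) :
  qmx_upper_triangular A ->
  qmx_nilpotent A ->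
  graph_tree (qgraph A) ->
  Num.sqrt (\sum_(i < n) beta i ^+ 2) = 1 ->
  (forall i, 0 <= beta i) ->
  forall w : quat R,
    (exists z : 'I_n -> quat R,
        (forall i, qnorm (z i) = 1) /\
        w = \sum_(i < n) \sum_(j < n)
              qmul (qreal (beta i * beta j)) (qmul (qmul (qconj (z i)) (A i j)) (z j)))
    <->
    (exists p : 'I_n -> 'I_n -> quat R,
        (forall i j, qnorm (p i j) = beta i * beta j * qnorm (A i j)) /\
        w = \sum_(i < n) \sum_(j < n) p i j).
Proof.
move=> ut _ tree _ bpos w; split.
  case=> z [hz ->].
  exists (fun i j => qmul (qreal (beta i * beta j)) (qmul (qmul (qconj (z i)) (A i j)) (z j))).
  split => // i j.
  by rewrite !qnorm_mul qnorm_real qnorm_conj !hz mul1r mulr1 ger0_norm // mulr_ge0.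
case=> p [hp ->].
pose t i j := if beta i * beta j != 0 then qmul (qreal (beta i * beta j)^-1) (p i j)
              else A i j.
have ht : forall i j, qnorm (t i j) = qnorm (A i j).
  move=> i j; rewrite /t; case: ifP => [bb0|_] //.
  rewrite qnorm_mul qnorm_real hp normfV ger0_norm ?mulr_ge0 //.
  by rewrite mulrA mulVf // mul1r.
pose C i j a b := qmul (qmul (qconj a) (A i j)) b = t i j.
pose P (i j : 'I_n) a b := if (i < j)%N then C i j a b
                           else if (j < i)%N then C j i b a else True.
have [z [Qz Pz]] : exists z : 'I_n -> quat R, (forall x, qnorm (z x) = 1) /\
    (forall x y, qgraph A x y -> P x y (z x) (z y)).
  apply: (@tree_assign _ (qgraph A) _ (fun a => qnorm a = 1) P (qreal 1)).
  - by rewrite qnorm_real normr1.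
  - by move=> i j; rewrite /qgraph orbC.
  - exact: tree.1.
  - exact: tree.2.
  - by move=> x y a b; rewrite /P; case: ltngtP.
  - move=> x y a exy ha; rewrite /P; case: ltngtP => h.
    + exact: step_fwd (ht x y) ha.
    + exact: step_bwd (ht y x) ha.
    + by exists a.
have Cz : forall i j, qmul (qmul (qconj (z i)) (A i j)) (z j) = t i j.
  move=> i j; case: (eqVneq (A i j) 0) => [a0|a0].
    rewrite a0 qmulr0 qmul0r; apply/esym/qnorm_eq0; by rewrite ht a0 qnorm0.
  have eij : qgraph A i j by rewrite /qgraph a0.
  have := Pz i j eij; rewrite /P; case: ltngtP => h //.
    by move: a0; rewrite ut // eqxx.
  by move: eij; rewrite (ord_inj h) (negPf (tree.2.1 j)).
exists z; split => //.
apply: eq_bigr => i _; apply: eq_bigr => j _.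
rewrite Cz /t; case: ifP => [bb0|/negbT]; last first.
  rewrite negbK => /eqP bb0; rewrite bb0 (_ : qreal 0 = 0) // qmul0r.
  by apply: qnorm_eq0; rewrite hp bb0 mul0r.
by rewrite qmulA qmul_real mulfV // qmul1r.
Qed.
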